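(* For every natural number $m>2$, $\mathrm{Log}_{=1}(\mathbb{R}^m)\not\subseteq\mathrm{Log}_{=1}(\mathbb{R}^2)$.
   Context: Modal formulas are built from a countable set of propositional variables using $\bot$, $\to$ and one unary modality $\lozenge$. A frame is a pair $(X,R)$; a valuation assigns subsets of $X$ to variables; $x\models\lozenge\varphi$ iff there is $y$ with $xRy$ and $y\models\varphi$. A formula is valid in a frame if true at every point under every valuation. For a metric space $(X,d)$, $\mathrm{Log}_{=1}(X)$ is the set of modal formulas valid in the frame $(X,R_{=1})$, where $xR_{=1}y$ iff $d(x,y)=1$. $\mathbb{R}^n$ carries the Euclidean metric. *)

(* Defs.v *)
From HB Require Import structures.
From mathcomp Require Import all_boot all_order all_algebra.
From mathcomp Require Import Rstruct.
Set Implicit Arguments. Unset Strict Implicit. Unset Printing Implicit Defensive.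
Import Order.TTheory GRing.Theory Num.Theory.
Local Open Scope ring_scope.

Inductive mformula : Type :=
| MVar : nat -> mformula
| MBot : mformula
| MImp : mformula -> mformula -> mformula
| MDia : mformula -> mformula.

Fixpoint msat (X : Type) (Rel : X -> X -> Prop) (V : nat -> X -> Prop)
  (x : X) (phi : mformula) : Prop :=
  match phi with
  | MVar p => V p x
  | MBot => False
  | MImp a b => msat Rel V x a -> msat Rel V x b
  | MDia a => exists y, Rel x y /\ msat Rel V y a
  end.

Definition mvalid (X : Type) (Rel : X -> X -> Prop) (phi : mformula) : Prop :=
  forall (V : nat -> X -> Prop) (x : X), msat Rel V x phi.

Definition Rn (n : nat) := 'rV[Rdefinitions.R]_n.

Definition euclid_dist (n : nat) (x y : Rn n) : Rdefinitions.R :=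
  Num.sqrt (\sum_(i < n) (x ord0 i - y ord0 i) ^+ 2).

Definition unit_dist_rel (n : nat) (x y : Rn n) : Prop := euclid_dist x y = 1.

Definition Log_eq1 (n : nat) (phi : mformula) : Prop :=
  mvalid (@unit_dist_rel n) phi.

(* Main.v *)
Require Import Defs.
From mathcomp Require Import all_boot.
From mathcomp Require Import all_order all_algebra Rstruct ring lra.
Import Order.TTheory GRing.Theory Num.Theory.
Local Open Scope ring_scope.
Set Implicit Arguments. Unset Strict Implicit.

Notation RR := Rdefinitions.R.

Definition dot (n : nat) (a b : Rn n) : RR := \sum_(i < n) a ord0 i * b ord0 i.

Lemma dotC (n : nat) (a b : Rn n) : dot a b = dot b a.
Proof. by apply: eq_bigr => i _; rewrite mulrC. Qed.

Lemma dotDl (n : nat) (a b c : Rn n) : dot (a + b) c = dot a c + dot b c.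
Proof. by rewrite /dot -big_split; apply: eq_bigr => i _; rewrite mxE mulrDl. Qed.

Lemma dotNl (n : nat) (a c : Rn n) : dot (- a) c = - dot a c.
Proof. by rewrite /dot -sumrN; apply: eq_bigr => i _; rewrite mxE mulNr. Qed.

Lemma dotBl (n : nat) (a b c : Rn n) : dot (a - b) c = dot a c - dot b c.
Proof. by rewrite dotDl dotNl. Qed.

Lemma dotZl (n : nat) (k : RR) (a c : Rn n) : dot (k *: a) c = k * dot a c.
Proof. by rewrite /dot mulr_sumr; apply: eq_bigr => i _; rewrite mxE mulrA. Qed.

Lemma dotBr (n : nat) (a b c : Rn n) : dot c (a - b) = dot c a - dot c b.
Proof. by rewrite dotC dotBl !(dotC c). Qed.

Lemma dotZr (n : nat) (k : RR) (a c : Rn n) : dot c (k *: a) = k * dot c a.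
Proof. by rewrite dotC dotZl dotC. Qed.

Lemma dot_ge0 (n : nat) (a : Rn n) : 0 <= dot a a.
Proof. by apply: sumr_ge0 => i _; rewrite -expr2 sqr_ge0. Qed.

Lemma dot_eq0 (n : nat) (a : Rn n) : dot a a = 0 -> a = 0.
Proof.
move=> h; apply/rowP => i; rewrite mxE.
have H0 : forall j : 'I_n, true -> 0 <= a ord0 j * a ord0 j.
  by move=> j _; rewrite -expr2 sqr_ge0.
have := psumr_eq0P H0 h (i:=i) isT.
move=> /eqP; rewrite mulf_eq0 orbb => /eqP.
by [].
Qed.

Lemma dist_dot (n : nat) (a b : Rn n) :
  euclid_dist a b = Num.sqrt (dot (a - b) (a - b)).
Proof.
by rewrite /euclid_dist /dot; congr Num.sqrt; apply: eq_bigr => i _; rewrite !mxE expr2.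
Qed.

Lemma dot_swap (n : nat) (a b : Rn n) : dot (a - b) (a - b) = dot (b - a) (b - a).
Proof. by rewrite -(opprB a b) dotNl dotC dotNl opprK. Qed.

Lemma dot_rel (n : nat) (a b : Rn n) : dot (a - b) (a - b) = 1 -> unit_dist_rel a b.
Proof. by move=> h; rewrite /unit_dist_rel dist_dot h sqrtr1. Qed.

Lemma rel_dot (n : nat) (a b : Rn n) : unit_dist_rel a b -> dot (a - b) (a - b) = 1.
Proof.
rewrite /unit_dist_rel dist_dot => h.
by rewrite -(sqr_sqrtr (dot_ge0 (a - b))) h expr1n.
Qed.

Definition hh (n : nat) (nv v : Rn n) : Rn n :=
  v - (2 * dot v nv / dot nv nv) *: nv.

Lemma hhB (n : nat) (nv a b : Rn n) : hh nv (a - b) = hh nv a - hh nv b.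
Proof. by rewrite /hh dotBl; apply/rowP => i; rewrite !mxE; ring. Qed.

Lemma hh_iso (n : nat) (nv v : Rn n) : dot (hh nv v) (hh nv v) = dot v v.
Proof.
rewrite /hh !dotBl !dotBr !dotZl !dotZr (dotC nv v).
have [->|nz] := eqVneq (dot nv nv) 0.
  by rewrite invr0 !mulr0 !mul0r !subr0.
by field.
Qed.

Definition mk (n : nat) (f : nat -> RR) : Rn n := \row_(i < n) f (val i).

Lemma mkB (n : nat) (f g : nat -> RR) :
  mk n f - mk n g = mk n (fun j => f j - g j).
Proof. by apply/rowP => i; rewrite !mxE. Qed.

Lemma dot_mk3 (k : nat) (f g : nat -> RR) :
  (forall j, (3 <= j)%N -> f j = 0) ->
  dot (mk k.+3 f) (mk k.+3 g) = f 0%N * g 0%N + f 1%N * g 1%N + f 2%N * g 2%N.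
Proof.
move=> hf; rewrite /dot !big_ord_recl big1 ?addr0.
  by rewrite !mxE /= addrA.
by move=> i _; rewrite !mxE /= hf ?mul0r.
Qed.

Definition fe (j : nat) : RR := if j == 0%N then 1 else 0.
Definition fz (j : nat) : RR :=
  if j == 0%N then 1/2 else if j == 1%N then Num.sqrt 3 / 2 else 0.
Definition fw (j : nat) : RR :=
  if j == 0%N then 1/2 else if j == 1%N then Num.sqrt 3 / 6
  else if j == 2%N then Num.sqrt (2/3) else 0.

Lemma s3sq : Num.sqrt (3 : RR) * Num.sqrt 3 = 3.
Proof. by rewrite -expr2 sqr_sqrtr // ler0n. Qed.

Lemma s23sq : Num.sqrt (2/3 : RR) * Num.sqrt (2/3) = 2/3.
Proof. rewrite -expr2 sqr_sqrtr //; lra. Qed.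

Lemma tetra (k : nat) (x y : Rn k.+3) : unit_dist_rel x y ->
  exists z w : Rn k.+3,
    unit_dist_rel y z /\ unit_dist_rel z x /\ unit_dist_rel z y /\
        unit_dist_rel z w /\ unit_dist_rel w x /\ unit_dist_rel w y.
Proof.
move=> /rel_dot; rewrite dot_swap => hu.
set u := y - x in hu.
have hux : y - x = u by [].
clearbody u.
set e := mk k.+3 fe.
set nv := e - u.
have hee : dot e e = 1.
  rewrite /e dot_mk3 /fe /=; first by ring.
  by case=> [|[|[|j]]].
have He : hh nv e = u.
  have [h0|nz] := eqVneq (dot nv nv) 0.
    have nv0 := dot_eq0 h0.
    have -> : u = e by apply/eqP; rewrite eq_sym -subr_eq0 -/nv nv0.
    by rewrite /hh nv0 scaler0 subr0.
  have E1 : dot nv nv = 2 * dot e nv.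
    rewrite /nv !dotBl !dotBr hee hu (dotC u e); ring.
  have c1 : 2 * dot e nv / dot nv nv = 1.
    by rewrite E1 divff // -E1.
  by rewrite /hh c1 scale1r /nv opprB addrC subrK.
have Z1 : forall j, (3 <= j)%N -> forall f : nat -> RR,
    f = fe \/ f = fz \/ f = fw -> f j = 0.
  move=> j hj h [->|[->|->]]; rewrite /fe /fz /fw;
  by case: j hj => [|[|[|j]]].
have Z3 : forall j, (3 <= j)%N -> forall f g : nat -> RR,
    f = fe \/ f = fz \/ f = fw -> g = fe \/ g = fz \/ g = fw ->
    f j - g j = 0.
  by move=> j hj f g hf hg; rewrite (Z1 j hj f hf) (Z1 j hj g hg) subr0.
have hs3 := s3sq; have hs23 := s23sq.
exists (x + hh nv (mk k.+3 fz)), (x + hh nv (mk k.+3 fw)).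
split; last split; last split; last split; last split.
all: apply: dot_rel.
- have -> : y - (x + hh nv (mk k.+3 fz)) = hh nv (e - mk k.+3 fz).
    by rewrite hhB He -hux; apply/rowP => i; rewrite !mxE; ring.
  rewrite hh_iso /e mkB dot_mk3; last by move=> j hj; apply: Z3; auto.
  rewrite /fe /fz /=; nra.
- have -> : x + hh nv (mk k.+3 fz) - x = hh nv (mk k.+3 fz).
    by apply/rowP => i; rewrite !mxE; ring.
  rewrite hh_iso dot_mk3; last by move=> j hj; apply: Z1; auto.
  rewrite /fz /=; nra.
- have -> : x + hh nv (mk k.+3 fz) - y = hh nv (mk k.+3 fz - e).
    by rewrite hhB He -hux; apply/rowP => i; rewrite !mxE; ring.
  rewrite hh_iso /e mkB dot_mk3; last by move=> j hj; apply: Z3; auto.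
  rewrite /fe /fz /=; nra.
- have -> : x + hh nv (mk k.+3 fz) - (x + hh nv (mk k.+3 fw)) =
            hh nv (mk k.+3 fz - mk k.+3 fw).
    by rewrite hhB; apply/rowP => i; rewrite !mxE; ring.
  rewrite hh_iso mkB dot_mk3; last by move=> j hj; apply: Z3; auto.
  rewrite /fw /fz /=; nra.
- have -> : x + hh nv (mk k.+3 fw) - x = hh nv (mk k.+3 fw).
    by apply/rowP => i; rewrite !mxE; ring.
  rewrite hh_iso dot_mk3; last by move=> j hj; apply: Z1; auto.
  rewrite /fw /=; nra.
- have -> : x + hh nv (mk k.+3 fw) - y = hh nv (mk k.+3 fw - e).
    by rewrite hhB He -hux; apply/rowP => i; rewrite !mxE; ring.
  rewrite hh_iso /e mkB dot_mk3; last by move=> j hj; apply: Z3; auto.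
  rewrite /fe /fw /=; nra.
Qed.

Definition mAnd (a b : mformula) := MImp (MImp a (MImp b MBot)) MBot.
Definition mBox (a : mformula) := MImp (MDia (MImp a MBot)) MBot.
Definition pP := MVar 0. Definition pQ := MVar 1.
Definition phiA := MDia (mAnd (MDia pP) (MDia pQ)).
Definition phiB := mAnd (MDia pP) (mAnd (MDia pQ) phiA).
Definition phi := MImp pP (mBox (MImp pQ (MDia phiB))).

Lemma valid_m (k : nat) : mvalid (@unit_dist_rel k.+3) phi.
Proof.
move=> V x /= hp [y [hxy hn]]; apply: hn => hq.
have [z [w [hyz [hzx [hzy [hzw [hwx hwy]]]]]]] := tetra hxy.
exists z; split => // hand; apply: hand.
  by exists x.
move=> hand; apply: hand.
  by exists y.
exists w; split => // hand; apply: hand.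
  by exists x.
by exists y.
Qed.

Definition y0 : Rn 2 := \row_(i < 2) (if val i == 0%N then 1 else 0).

Lemma rel2 (a b : Rn 2) : unit_dist_rel a b ->
  (a ord0 ord0 - b ord0 ord0) ^+ 2 + (a ord0 (lift ord0 ord0) - b ord0 (lift ord0 ord0)) ^+ 2 = 1.
Proof.
move=> /rel_dot; rewrite /dot !big_ord_recl big_ord0 addr0 !mxE !expr2.
by [].
Qed.

Lemma notvalid2 : ~ mvalid (@unit_dist_rel 2) phi.
Proof.
move=> Hv.
have := Hv (fun j v => v = if j == 0%N then 0 else y0) 0 => /=.
move=> /(_ erefl); apply.
exists y0; split.
  apply: dot_rel; rewrite /dot !big_ord_recl big_ord0 !mxE /=; ring.
move=> /(_ erefl) [z [hyz hB]]; apply: hB => -[x1 [hzx ex1]] hB; apply: hB => -[y1 [hzy ey1]].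
move=> [w [hzw hA]]; apply: hA => -[x2 [hwx ex2]] [y2 [hwy ey2]].
simpl in ex1, ey1, ex2, ey2; subst x1 y1 x2 y2.
move: (rel2 hzx) (rel2 hzy) (rel2 hzw) (rel2 hwx) (rel2 hwy).
rewrite /y0 !mxE /=.
set a := z ord0 ord0; set b := z ord0 _; set c := w ord0 ord0; set d := w ord0 _.
move=> h1 h2 h3 h4 h5.
have ha : a = 1/2 by nra.
have hc : c = 1/2 by nra.
have hbd : b * d = 1/4 by nra.
have : (b * d) ^+ 2 = b ^+ 2 * d ^+ 2 by ring.
nra.
Qed.

Local Close Scope ring_scope.
Unset Implicit Arguments.

Theorem proposition3p12 (m : nat) (hm : (2 < m)%N) :
  ~ (forall phi : mformula, Log_eq1 m phi -> Log_eq1 2 phi).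
Proof.
case: m hm => [|[|[|k]]] // _ H.
apply: notvalid2; apply: (H phi); exact: valid_m.
Qed.
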